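(* Let $(H,\alpha)$ be a monoidal Hom-bialgebra, let $(A,\beta)$ be a left $(H,\alpha)$-Hom-comodule coalgebra with coaction $a\mapsto a_{(-1)}\otimes a_{(0)}$, and let $m\in\mathbb{Z}$. On $A\rtimes H:=A\otimes H$ define $$\varepsilon_{A\rtimes H}(a\rtimes h)=\varepsilon(a)\varepsilon(h),\qquad \Delta_{A\rtimes H}(a\rtimes h)=a_{1}\rtimes\alpha^{m}(a_{2(-1)})\alpha^{-1}(h_{1})\otimes\beta(a_{2(0)})\rtimes h_{2}.$$ Then $(A\rtimes H,\beta\otimes\alpha)$ with $\Delta_{A\rtimes H}$ and $\varepsilon_{A\rtimes H}$ is a monoidal Hom-coalgebra.
   Context: All vector spaces are over a field $k$; Sweedler notation $\Delta(c)=c_1\otimes c_2$. A monoidal Hom-algebra $(A,\beta)$: multiplication, unit $1_A$, linear automorphism $\beta$ with $\beta(a)(bc)=(ab)\beta(c)$, $\beta(ab)=\beta(a)\beta(b)$, $a1_A=1_Aa=\beta(a)$, $\beta(1_A)=1_A$. A monoidal Hom-coalgebra $(C,\gamma)$: $\Delta$, $\varepsilon$, linear automorphism $\gamma$ with $\gamma^{-1}(c_1)\otimes\Delta(c_2)=\Delta(c_1)\otimes\gamma^{-1}(c_2)$, $\Delta(\gamma(c))=\gamma(c_1)\otimes\gamma(c_2)$, $c_1\varepsilon(c_2)=\gamma^{-1}(c)=\varepsilon(c_1)c_2$, $\varepsilon\circ\gamma=\varepsilon$. A monoidal Hom-bialgebra $(H,\alpha)$ is both (with the same $\alpha$) with $\Delta,\varepsilon$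 multiplicative and unital. A left $(H,\alpha)$-Hom-comodule is $(M,\mu)$, $\mu$ a linear automorphism, with $\rho(x)=x_{(-1)}\otimes x_{(0)}$ satisfying $\Delta_H(x_{(-1)})\otimes\mu^{-1}(x_{(0)})=\alpha^{-1}(x_{(-1)})\otimes x_{(0)(-1)}\otimes x_{(0)(0)}$, $\rho(\mu(x))=\alpha(x_{(-1)})\otimes\mu(x_{(0)})$, $\varepsilon_H(x_{(-1)})x_{(0)}=\mu^{-1}(x)$. A left $(H,\alpha)$-Hom-comodule coalgebra is a monoidal Hom-coalgebra $(A,\beta)$ which is a left $(H,\alpha)$-Hom-comodule such that $b_{(-1)}\otimes b_{(0)1}\otimes b_{(0)2}=b_{1(-1)}b_{2(-1)}\otimes b_{1(0)}\otimes b_{2(0)}$ and $\varepsilon(b_{(0)})b_{(-1)}=\varepsilon(b)1_H$. *)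

(* Defs.v *)
From HB Require Import structures.
From mathcomp Require Import all_boot all_algebra.
From mathcomp Require Import boolp classical_sets functions.

Set Implicit Arguments.
Unset Strict Implicit.
Unset Printing Implicit Defensive.

Import GRing.Theory.
Local Open Scope ring_scope.

(* A (x) B is realised as the subspace of the space of K-valued functions   *)
(* on {scalar A} * {scalar B} (pairs of linear functionals) spanned by the  *)
(* pure tensors  a (x) b := (f, g) |-> f a * g b.  Over a field this map    *)
(* from the algebraic tensor product is injective, so this IS A (x) B.      *)
Section Tensor.
Context {K : fieldType} (A B : lmodType K).

Definition dual2 := {scalar A} -> {scalar B} -> K^o.

Definition tens_of (s : seq (A * B)) : dual2 :=
  fun f g => \sum_(p <- s) f p.1 * g p.2.

Definition is_tensor : {pred dual2} := fun t => `[< exists s, t = tens_of s >].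

Lemma is_tensor_closed : subsemimod_closed is_tensor.
Proof.
split; [split|].
- rewrite unfold_in /=; apply/asboolP; exists [::].
  by apply: funext => f; apply: funext => g; rewrite /tens_of big_nil.
- move=> u v; rewrite !unfold_in /= => /asboolP [s ->] /asboolP [t ->].
  apply/asboolP; exists (s ++ t).
  by apply: funext => f; apply: funext => g; rewrite /tens_of big_cat.
- move=> a u; rewrite !unfold_in /= => /asboolP [s ->]; apply/asboolP.
  exists [seq (a *: p.1, p.2) | p <- s].
  apply: funext => f; apply: funext => g; rewrite /tens_of big_map /=.
  rewrite [LHS]/(_ *: _) /= [LHS]/(_ *: _) /= /GRing.scale /= mulr_sumr.
  by apply: eq_bigr => p _; rewrite linearZ /= mulrA.
Qed.

HB.instance Definition _ :=
  GRing.isSubmodClosed.Build K dual2 is_tensor is_tensor_closed.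

Record tensor := Tensor { tensor_val :> dual2; _ : tensor_val \in is_tensor }.

HB.instance Definition _ := [isSub for tensor_val].
HB.instance Definition _ := [Choice of tensor by <:].
HB.instance Definition _ := [SubChoice_isSubLmodule of tensor by <:].

Lemma tmul_subproof (a : A) (b : B) : tens_of [:: (a, b)] \in is_tensor.
Proof. by apply/asboolP; exists [:: (a, b)]. Qed.

Definition tmul (a : A) (b : B) : tensor := Tensor (tmul_subproof a b).

(* a chosen Sweedler representation  t = \sum_(p <- rep t) p.1 (x) p.2 *)
Definition rep (t : tensor) : seq (A * B) :=
  projT1 (cid (asboolW (valP t))).

End Tensor.

Arguments tmul {K A B}.
Arguments rep {K A B}.
Notation "a \ot b" := (tmul a b) (at level 40, left associativity).

Definition tassoc {K : fieldType} {A B C : lmodType K}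
  (t : tensor A (tensor B C)) : tensor (tensor A B) C :=
  \sum_(p <- rep t) \sum_(q <- rep p.2) (p.1 \ot q.1) \ot q.2.

Definition zpow {T : Type} (f fi : T -> T) (m : int) : T -> T :=
  match m with Posz n => iter n f | Negz n => iter n.+1 fi end.

Record HomCoalgebraAx {K : fieldType} (C : lmodType K) (gam gami : C -> C)
    (del : C -> tensor C C) (eps : C -> K) : Prop := {
  hc_gam_lin : linear gam;
  hc_gamK : cancel gam gami;
  hc_gamiK : cancel gami gam;
  hc_del_lin : linear del;
  hc_eps_lin : scalar eps;
  hc_coassoc : forall c,
    tassoc (\sum_(p <- rep (del c)) gami p.1 \ot del p.2)
    = \sum_(p <- rep (del c)) del p.1 \ot gami p.2;
  hc_del_gam : forall c,
    del (gam c) = \sum_(p <- rep (del c)) gam p.1 \ot gam p.2;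
  hc_counit_l : forall c, \sum_(p <- rep (del c)) eps p.2 *: p.1 = gami c;
  hc_counit_r : forall c, \sum_(p <- rep (del c)) eps p.1 *: p.2 = gami c;
  hc_eps_gam : forall c, eps (gam c) = eps c
}.

Definition is_hom_coalgebra {K : fieldType} (C : lmodType K) (gam : C -> C)
    (del : C -> tensor C C) (eps : C -> K) : Prop :=
  exists gami : C -> C, HomCoalgebraAx gam gami del eps.

Record HomAlgebraAx {K : fieldType} (H : lmodType K) (mul : H -> H -> H)
    (one : H) (alpha alphai : H -> H) : Prop := {
  ha_mul_linl : forall b, linear (mul^~ b);
  ha_mul_linr : forall a, linear (mul a);
  ha_alpha_lin : linear alpha;
  ha_alphaK : cancel alpha alphai;
  ha_alphaiK : cancel alphai alpha;
  ha_assoc : forall a b c, mul (alpha a) (mul b c) = mul (mul a b) (alpha c);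
  ha_alpha_mul : forall a b, alpha (mul a b) = mul (alpha a) (alpha b);
  ha_unit_l : forall a, mul one a = alpha a;
  ha_unit_r : forall a, mul a one = alpha a;
  ha_alpha_one : alpha one = one
}.

Record HomBialgebraAx {K : fieldType} (H : lmodType K) (mul : H -> H -> H)
    (one : H) (alpha alphai : H -> H) (del : H -> tensor H H) (eps : H -> K)
    : Prop := {
  hb_alg : HomAlgebraAx mul one alpha alphai;
  hb_coalg : HomCoalgebraAx alpha alphai del eps;
  hb_del_mul : forall h g,
    del (mul h g) = \sum_(p <- rep (del h)) \sum_(q <- rep (del g))
                      mul p.1 q.1 \ot mul p.2 q.2;
  hb_del_one : del one = one \ot one;
  hb_eps_mul : forall h g, eps (mul h g) = eps h * eps g;
  hb_eps_one : eps one = 1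
}.

Record HomComoduleAx {K : fieldType} (H M : lmodType K) (alpha alphai : H -> H)
    (delH : H -> tensor H H) (epsH : H -> K) (mu mui : M -> M)
    (rho : M -> tensor H M) : Prop := {
  hm_mu_lin : linear mu;
  hm_muK : cancel mu mui;
  hm_muiK : cancel mui mu;
  hm_rho_lin : linear rho;
  hm_coassoc : forall x,
    \sum_(p <- rep (rho x)) delH p.1 \ot mui p.2
    = tassoc (\sum_(p <- rep (rho x)) alphai p.1 \ot rho p.2);
  hm_rho_mu : forall x,
    rho (mu x) = \sum_(p <- rep (rho x)) alpha p.1 \ot mu p.2;
  hm_counit : forall x, \sum_(p <- rep (rho x)) epsH p.1 *: p.2 = mui x
}.

Record HomComoduleCoalgebraAx {K : fieldType} (H A : lmodType K)
    (mulH : H -> H -> H) (oneH : H) (alpha alphai : H -> H)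
    (delH : H -> tensor H H) (epsH : H -> K)
    (beta betai : A -> A) (delA : A -> tensor A A) (epsA : A -> K)
    (rho : A -> tensor H A) : Prop := {
  hcc_coalg : HomCoalgebraAx beta betai delA epsA;
  hcc_comod : HomComoduleAx alpha alphai delH epsH beta betai rho;
  hcc_rho_del : forall b,
    \sum_(p <- rep (rho b)) p.1 \ot delA p.2
    = \sum_(p <- rep (delA b)) \sum_(q <- rep (rho p.1)) \sum_(r <- rep (rho p.2))
        mulH q.1 r.1 \ot (q.2 \ot r.2);
  hcc_rho_eps : forall b, \sum_(p <- rep (rho b)) epsA p.2 *: p.1 = epsA b *: oneH
}.

Section Smash.
Context {K : fieldType} (H A : lmodType K) (mulH : H -> H -> H)
  (alpha alphai : H -> H) (delH : H -> tensor H H) (epsH : H -> K)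
  (beta : A -> A) (delA : A -> tensor A A) (epsA : A -> K)
  (rho : A -> tensor H A) (m : int).

Definition smash_gam (t : tensor A H) : tensor A H :=
  \sum_(p <- rep t) beta p.1 \ot alpha p.2.

Definition smash_eps (t : tensor A H) : K :=
  \sum_(p <- rep t) epsA p.1 * epsH p.2.

Definition smash_del (t : tensor A H) : tensor (tensor A H) (tensor A H) :=
  \sum_(p <- rep t) \sum_(q <- rep (delA p.1)) \sum_(r <- rep (rho q.2))
    \sum_(s <- rep (delH p.2))
      (q.1 \ot mulH (zpow alpha alphai m r.1) (alphai s.1))
        \ot (beta r.2 \ot s.2).

End Smash.

(* Main.v *)
Require Import Defs.
From HB Require Import structures.
From mathcomp Require Import all_boot all_algebra.
From mathcomp Require Import boolp classical_sets functions.
Set Implicit Arguments. Unset Strict Implicit. Unset Printing Implicit Defensive.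
Import GRing.Theory.
Local Open Scope ring_scope.

Section Sep.
Local Open Scope classical_set_scope.
Context {K : fieldType} (A : lmodType K).

Definition mkS (f : A -> K) (H : scalar f) : {scalar A} :=
  HB.pack f (GRing.isLinear.Build K A K *%R f H).

Definition inspan (l : seq A) (x : A) :=
  exists k : nat -> K, x = \sum_(i < size l) k i *: l`_i.

Definition lclosed (U : set A) := forall c x y, U x -> U y -> U (c *: x + y).

Lemma sep (l : seq A) (v : A) : ~ inspan l v ->
  exists f : {scalar A}, (forall x, x \in l -> f x = 0) /\ f v = 1.
Proof.
move=> nv.
pose P (U : set A) := [/\ lclosed U, ~ U v & (exists u, U u) -> forall x, x \in l -> U x].
have S0c : lclosed (inspan l).
  move=> c x y [k1 ->] [k2 ->]; exists (fun i => c * k1 i + k2 i).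
  rewrite scaler_sumr -big_split /=; apply: eq_bigr => i _.
  by rewrite scalerDl scalerA.
have S0l : forall x, x \in l -> inspan l x.
  move=> x xl; exists (fun i => (i == index x l)%:R).
  have il : (index x l < size l)%N by rewrite index_mem.
  rewrite (bigD1 (Ordinal il)) //= eqxx scale1r nth_index // big1 ?addr0 //.
  move=> i; rewrite -val_eqE /= => /negbTE ->; by rewrite scale0r.
have [A0 [[A0c A0v A0l] A0max]] : exists A0, P A0 /\ forall B, A0 `<` B -> ~ P B.
  apply: Zorn_bigcup => F FP Ftot; split.
  - move=> c x y [X FX Xx] [Y FY Yy].
    have [XY|YX] := Ftot _ _ FX FY.
    + by exists Y => //; have [Yc _ _] := FP _ FY; apply: Yc => //; exact: XY.
    + by exists X => //; have [Xc _ _] := FP _ FX; apply: Xc => //; exact: YX.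
  - by move=> [X FX Xv]; have [_ Xnv _] := FP _ FX.
  - move=> [u [X FX Xu]] x xl; exists X => //.
    by have [_ _ Xl] := FP _ FX; apply: Xl => //; exists u.
have A0ne : exists u, A0 u.
  apply: contrapT => ne.
  apply: (A0max (inspan l)); last by split.
  split.
  + by move=> x A0x; exfalso; apply: (ne); exists x.
  + move=> sub; apply: (ne); exists 0; apply: sub.
    by exists (fun _ => 0); rewrite big1 // => i _; rewrite scale0r.
have A00 : A0 0.
  by case: A0ne => u Au; have := A0c (-1) u u Au Au; rewrite scaleN1r addNr.
have A0Z : forall c x, A0 x -> A0 (c *: x).
  by move=> c x Ax; have := A0c c x 0 Ax A00; rewrite addr0.
have A0D : forall x y, A0 x -> A0 y -> A0 (x + y).
  by move=> x y Ax Ay; have := A0c 1 x y Ax Ay; rewrite scale1r.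
have uniq : forall u1 u2 c1 c2, A0 u1 -> A0 u2 -> u1 + c1 *: v = u2 + c2 *: v -> c1 = c2.
  move=> u1 u2 c1 c2 A1 A2 e; apply: contrapT => ne.
  have ne' : c1 - c2 != 0 by rewrite subr_eq0; apply/eqP.
  apply: (A0v).
  have -> : v = (c1 - c2)^-1 *: (u2 - u1).
    apply: (canRL (scalerK ne')); rewrite scalerBl.
    by apply: (addIr (c2 *: v)); rewrite subrK addrAC -e addrAC subrr add0r.
  by apply: (A0Z); apply: (A0D) => //; rewrite -scaleN1r; apply: (A0Z).
have dec : forall a, exists c, exists u, A0 u /\ a = u + c *: v.
  move=> a; apply: contrapT => na.
  pose B := fun y => exists u c, A0 u /\ y = u + c *: a.
  apply: (A0max B).
  + split.
    * by move=> x A0x; exists x, 0; rewrite scale0r addr0.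
    * move=> sub; have Aa : A0 a.
        by apply: sub; exists 0, 1; rewrite add0r scale1r.
      by apply: (na); exists 0, a; rewrite scale0r addr0.
  + split.
    * move=> c x y [u1 [c1 [A1 ->]]] [u2 [c2 [A2 ->]]].
      exists (c *: u1 + u2), (c * c1 + c2); split; first by apply: (A0c).
      by rewrite scalerDr scalerDl scalerA addrACA.
    * move=> [u [c [Au e]]].
      have [c0|cn0] := eqVneq c 0.
        by apply: (A0v); rewrite e c0 scale0r addr0.
      apply: (na); exists c^-1, (- (c^-1 *: u)); split.
        by rewrite -scaleNr; apply: (A0Z).
      by rewrite e scalerDr scalerA mulVf // scale1r addKr.
    * by move=> _ x xl; exists x, 0; rewrite scale0r addr0; split => //; apply: (A0l).
pose f (a : A) : K := projT1 (cid (dec a)).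
have fP : forall a, exists u, A0 u /\ a = u + f a *: v.
  by move=> a; rewrite /f; case: (cid (dec a)).
have fl : scalar f.
  move=> c x y; have [ux [Ax ex]] := fP x; have [uy [Ay ey]] := fP y.
  have [uz [Az ez]] := fP (c *: x + y).
  apply: (uniq uz (c *: ux + uy)) => //; first by apply: (A0c).
  rewrite -ez {1}ex {1}ey scalerDl scalerDr -scalerA.
  by rewrite addrACA.
exists (mkS fl); split.
- move=> x xl /=; have [u [Au e]] := fP x.
  by apply: (uniq u x) => //; [apply: (A0l) | rewrite -e scale0r addr0].
- have [u [Au e]] := fP v; rewrite /=.
  by symmetry; apply: (uniq 0 u) => //; rewrite -e add0r scale1r.
Qed.
End Sep.

Section Lin.
Context {K : fieldType} (U V : lmodType K).
Definition mkL (f : U -> V) (H : linear f) : {linear U -> V} :=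
  HB.pack f (GRing.isLinear.Build K U V *:%R f H).
Variables (f : U -> V) (H : linear f).
Lemma lin0 : f 0 = 0. Proof. exact: (linear0 (mkL H)). Qed.
Lemma linD x y : f (x + y) = f x + f y. Proof. exact: (linearD (mkL H)). Qed.
Lemma linZ c x : f (c *: x) = c *: f x. Proof. exact: (linearZZ (mkL H)). Qed.
Lemma linN x : f (- x) = - f x. Proof. exact: (linearN (mkL H)). Qed.
Lemma lin_sum I (r : seq I) (P : pred I) (F : I -> U) :
  f (\sum_(i <- r | P i) F i) = \sum_(i <- r | P i) f (F i).
Proof. exact: (linear_sum (mkL H)). Qed.
End Lin.

Section Inj.
Context {K : fieldType} (A B : lmodType K).

Definition bilin (V : lmodType K) (G : A -> B -> V) :=
  (forall b, linear (G^~ b)) /\ (forall a, linear (G a)).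

Lemma form_bilin (f : {scalar A}) (g : {scalar B}) :
  bilin (fun x y => (f x * g y : K^o)).
Proof.
split=> [b c x y|a c x y] /=.
- rewrite linearP mulrDl; congr (_ + _); by rewrite -mulrA.
- rewrite linearP mulrDr; congr (_ + _); by rewrite mulrCA.
Qed.

Lemma red (s : seq (A * B)) a b (k : nat -> K) (V : lmodType K) (G : A -> B -> V) :
  bilin G -> a = \sum_(i < size s) k i *: (nth (0, 0) s i).1 ->
  \sum_(p <- (a, b) :: s) G p.1 p.2 =
  \sum_(p <- [seq ((nth (0,0) s i).1, (nth (0,0) s i).2 + k i *: b) | i <- iota 0 (size s)]) G p.1 p.2.
Proof.
move=> [G1 G2] ->; rewrite big_cons big_map (big_nth (0,0)) /index_iota subn0.
rewrite (lin_sum (G1 b)) -(big_mkord xpredT (fun i => G (k i *: (nth (0,0) s i).1) b)).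
rewrite /index_iota subn0 addrC -big_split /=; apply: eq_bigr => i _.
by rewrite (linD (G2 _)) (linZ (G2 _)) (linZ (G1 b)).
Qed.

Lemma tinj (s : seq (A * B)) :
  (forall (f : {scalar A}) (g : {scalar B}), \sum_(p <- s) f p.1 * g p.2 = 0) ->
  forall (V : lmodType K) (G : A -> B -> V), bilin G -> \sum_(p <- s) G p.1 p.2 = 0.
Proof.
move: {2}(size s) (leqnn (size s)) => n; elim: n s => [|n IH] [|[a b] s] //=.
- by move=> _ _ V G _; rewrite big_nil.
- by move=> _ _ V G _; rewrite big_nil.
rewrite ltnS => sn hyp V G Gb.
have [[k ek]|nsp] := pselect (inspan (map fst s) a).
- rewrite size_map in ek.
  have ek' : a = \sum_(i < size s) k i *: (nth (0, 0) s i).1.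
    by rewrite ek; apply: eq_bigr => i _; rewrite (nth_map (0,0)).
  rewrite (red b Gb ek'); apply: IH => //; first by rewrite size_map size_iota.
  by move=> f g; rewrite -(red b (form_bilin f g) ek') hyp.
- have [f [f0 f1]] := sep nsp.
  have gb : forall g : {scalar B}, g b = 0.
    move=> g; have := hyp f g; rewrite big_cons f1 mul1r big1_seq ?addr0 //.
    by move=> p /andP[_ ps]; rewrite f0 ?mul0r // map_f.
  have b0 : b = 0.
    apply: contrapT => bn0.
    have nsb : ~ inspan [::] b.
      by move=> [k' eb]; apply: bn0; rewrite eb big_ord0.
    by have [g [_ g1]] := sep nsb; move: (gb g); rewrite g1 => /eqP; rewrite oner_eq0.
  rewrite big_cons b0 (lin0 (Gb.2 a)) add0r; apply: IH => // f' g.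
  by move: (hyp f' g); rewrite big_cons b0 linear0 mulr0 add0r.
Qed.
End Inj.

Section Lift.
Context {K : fieldType} (A B : lmodType K).

Definition tlift (V : lmodType K) (G : A -> B -> V) (t : tensor A B) : V :=
  \sum_(p <- rep t) G p.1 p.2.

Lemma rep_spec (t : tensor A B) : tensor_val t = tens_of (rep t).
Proof. exact: (projT2 (cid (asboolW (valP t)))). Qed.

Lemma UP (V : lmodType K) (G : A -> B -> V) (t : tensor A B) s :
  bilin G -> tensor_val t = tens_of s -> tlift G t = \sum_(p <- s) G p.1 p.2.
Proof.
move=> bG ts; apply/eqP; rewrite -subr_eq0; apply/eqP; rewrite /tlift.
have HH : \sum_(p <- rep t) G p.1 p.2 + \sum_(p <- s) G (- p.1) p.2 = 0.
  have := @tinj K A B (rep t ++ [seq (- p.1, p.2) | p <- s]) _ V G bG.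
  rewrite big_cat big_map /=; apply.
  move=> f g; rewrite big_cat big_map /=.
  have e1 := congr1 (fun d => d f g) (rep_spec t).
  have e2 := congr1 (fun d => d f g) ts.
  rewrite /tens_of /= in e1 e2.
  rewrite -e1 e2 -big_split /= big1 // => p _.
  by rewrite linearN mulNr addrN.
rewrite -[RHS]HH; congr (_ + _); rewrite -sumrN; apply: eq_bigr => p _.
by rewrite (linN (bG.1 _)).
Qed.

Lemma dapp (d1 d2 : dual2 A B) f g : (d1 + d2) f g = d1 f g + d2 f g.
Proof. by []. Qed.
Lemma dappZ c (d1 : dual2 A B) f g : (c *: d1) f g = c * d1 f g.
Proof. by []. Qed.

Lemma tval_inj : injective (@tensor_val K A B).
Proof. exact: val_inj. Qed.

Lemma tvalP c (u v : tensor A B) f g :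
  tensor_val (c *: u + v) f g = c * tensor_val u f g + tensor_val v f g.
Proof. by []. Qed.

Lemma tmul_val (a : A) (b : B) : tensor_val (a \ot b) = tens_of [:: (a, b)].
Proof. by []. Qed.

Lemma lift_tmul (V : lmodType K) (G : A -> B -> V) a b :
  bilin G -> tlift G (a \ot b) = G a b.
Proof. by move=> bG; rewrite (UP bG (tmul_val a b)) big_seq1. Qed.

Lemma lift_lin (V : lmodType K) (G : A -> B -> V) : bilin G -> linear (tlift G).
Proof.
move=> bG c t1 t2.
rewrite (UP (s := [seq (c *: p.1, p.2) | p <- rep t1] ++ rep t2) bG).
  rewrite big_cat big_map /= scaler_sumr; congr (_ + _).
  by apply: eq_bigr => p _; rewrite (linZ (bG.1 _)).
apply: funext => f; apply: funext => g.
rewrite /= rep_spec [tensor_val t2]rep_spec /tens_of /=.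
rewrite dapp dappZ big_cat big_map /= mulr_sumr.
congr (_ + _); apply: eq_bigr => p _.
by rewrite linearZ /= mulrA.
Qed.

Lemma tmul_bilin : bilin (@tmul K A B).
Proof.
split=> [b c x y|a c x y]; apply: tval_inj; apply: funext => f; apply: funext => g.
- rewrite tvalP !tmul_val /tens_of !big_seq1 /=.
  by rewrite linearP mulrDl mulrA.
- rewrite tvalP !tmul_val /tens_of !big_seq1 /=.
  by rewrite linearP mulrDr mulrCA.
Qed.

Lemma val_sum (r : seq (A * B)) (F : A * B -> tensor A B) :
  tensor_val (\sum_(p <- r) F p) = \sum_(p <- r) tensor_val (F p).
Proof.
by elim: r => [|p r IH]; rewrite ?big_nil ?big_cons //= IH.
Qed.

Lemma tensor_eq (t : tensor A B) : tlift tmul t = t.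
Proof.
apply: tval_inj; rewrite /tlift val_sum rep_spec.
apply: funext => f; apply: funext => g.
rewrite !fct_sumE /tens_of; apply: eq_bigr => p _.
by rewrite tmul_val /tens_of big_seq1.
Qed.

Lemma lift_comp (V W : lmodType K) (G : A -> B -> V) (phi : V -> W) t :
  linear phi -> phi (tlift G t) = tlift (fun x y => phi (G x y)) t.
Proof. by move=> lp; rewrite /tlift (lin_sum lp). Qed.

Lemma lift_ext (V : lmodType K) (G G' : A -> B -> V) t :
  (forall x y, G x y = G' x y) -> tlift G t = tlift G' t.
Proof. by move=> e; apply: eq_bigr => p _; rewrite e. Qed.

Lemma tensor_ext (V : lmodType K) (phi psi : tensor A B -> V) :
  linear phi -> linear psi -> (forall a b, phi (a \ot b) = psi (a \ot b)) ->
  forall t, phi t = psi t.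
Proof.
move=> lp lq e t; rewrite -(tensor_eq t) (lift_comp _ _ lp) (lift_comp _ _ lq).
by apply: lift_ext.
Qed.

Lemma lift_add (V : lmodType K) (G1 G2 : A -> B -> V) t :
  tlift (fun x y => G1 x y + G2 x y) t = tlift G1 t + tlift G2 t.
Proof. exact: big_split. Qed.

Lemma lift_scale (V : lmodType K) c (G : A -> B -> V) t :
  tlift (fun x y => c *: G x y) t = c *: tlift G t.
Proof. by rewrite /tlift scaler_sumr. Qed.

End Lift.

Section LiftLift.
Context {K : fieldType} (A B C D : lmodType K).
Lemma lift_lift_tmul (V : lmodType K) (G : C -> D -> V) (F1 : A -> B -> C) (F2 : A -> B -> D) t :
  bilin G -> tlift G (tlift (fun u v => F1 u v \ot F2 u v) t) = tlift (fun u v => G (F1 u v) (F2 u v)) t.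
Proof.
move=> bG; rewrite (lift_comp _ _ (lift_lin bG)); apply: lift_ext => x y.
exact: lift_tmul.
Qed.
End LiftLift.

Section LinLemmas.
Context {K : fieldType}.
Implicit Types U V W X Y : lmodType K.
Lemma lin_id U : linear (fun x : U => x). Proof. by []. Qed.
Lemma lin_comp U V W (f : V -> W) (h : U -> V) : linear f -> linear h -> linear (fun x => f (h x)).
Proof. by move=> lf lh c x y; rewrite lh lf. Qed.
Lemma lin_lift_arg U X Y V (G : X -> Y -> V) (h : U -> tensor X Y) :
  bilin G -> linear h -> linear (fun x => tlift G (h x)).
Proof. by move=> bG lh; apply: (lin_comp (lift_lin bG) lh). Qed.
Lemma lin_lift_fun U X Y V (G : U -> X -> Y -> V) (t : tensor X Y) :
  (forall a b, linear (fun x => G x a b)) -> linear (fun x => tlift (G x) t).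
Proof.
move=> lG c x y; rewrite /tlift scaler_sumr -big_split; apply: eq_bigr => p _.
exact: lG.
Qed.
Lemma lin_tmul_l U X Y (h : U -> X) (b : Y) : linear h -> linear (fun x => h x \ot b).
Proof. by move=> lh; exact: (lin_comp ((tmul_bilin X Y).1 b) lh). Qed.
Lemma lin_tmul_r U X Y (h : U -> Y) (a : X) : linear h -> linear (fun x => a \ot h x).
Proof. by move=> lh; exact: (lin_comp ((tmul_bilin X Y).2 a) lh). Qed.
Lemma lin_add U V (h1 h2 : U -> V) : linear h1 -> linear h2 -> linear (fun x => h1 x + h2 x).
Proof.
move=> l1 l2 c x y; rewrite l1 l2 scalerDr.
by rewrite -!addrA; congr (_ + _); rewrite addrCA.
Qed.
Lemma lin_scal_l U V (h : U -> V) c : linear h -> linear (fun x => c *: h x).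
Proof. by move=> l1 d x y; rewrite l1 scalerDr !scalerA mulrC. Qed.
Lemma lin_scal_r U V (e : U -> K) (v : V) : scalar e -> linear (fun x => e x *: v).
Proof. by move=> le c x y; rewrite le scalerDl scalerA. Qed.
Lemma lin_app2l U X Y V (F : X -> Y -> V) (h : U -> X) c :
  (forall b, linear (F^~ b)) -> linear h -> linear (fun x => F (h x) c).
Proof. by move=> lF lh; apply: (lin_comp (lF c) lh). Qed.
Lemma lin_app2r U X Y V (F : X -> Y -> V) (h : U -> Y) c :
  (forall a, linear (F a)) -> linear h -> linear (fun x => F c (h x)).
Proof. by move=> lF lh; apply: (lin_comp (lF c) lh). Qed.
Lemma lin_inv U (f g : U -> U) : linear f -> cancel f g -> cancel g f -> linear g.
Proof.
by move=> lf fK gK c x y; apply: (can_inj fK); rewrite gK lf !gK.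
Qed.
End LinLemmas.

Lemma lift_exchange {K : fieldType} (X1 Y1 X2 Y2 V : lmodType K)
  (G : X1 -> Y1 -> X2 -> Y2 -> V) (t1 : tensor X1 Y1) (t2 : tensor X2 Y2) :
  tlift (fun x y => tlift (G x y) t2) t1 = tlift (fun u v => tlift (fun x y => G x y u v) t1) t2.
Proof. exact: exchange_big. Qed.

Lemma scal_comp {K : fieldType} (U V : lmodType K) (e : V -> K) (h : U -> V) :
  scalar e -> linear h -> scalar (fun x => e (h x)).
Proof. by move=> le lh c x y; rewrite lh le. Qed.

Lemma lin_app3a {K : fieldType} (U X Y Z V : lmodType K) (F : X -> Y -> Z -> V) (h : U -> X) c d :
  (forall b c, linear (fun x => F x b c)) -> linear h -> linear (fun x => F (h x) c d).
Proof. by move=> lF lh; apply: (lin_comp (lF c d) lh). Qed.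
Lemma lin_app3b {K : fieldType} (U X Y Z V : lmodType K) (F : X -> Y -> Z -> V) (h : U -> Y) c d :
  (forall a c, linear (fun y => F a y c)) -> linear h -> linear (fun x => F c (h x) d).
Proof. by move=> lF lh; apply: (lin_comp (lF c d) lh). Qed.

Ltac lhyp := first [ assumption | match goal with Hf : forall _, _ |- _ => apply: Hf end ].
Ltac slin := cbv beta; first
  [ lhyp
  | refine (@scal_comp _ _ _ _ _ _ _); [lhyp | lin] ]
with bil := split => ? ; cbv beta; lin
with tril := split => ? ? ; cbv beta; lin
with lin := cbv beta delta [Datatypes.id]; match goal with
 | |- @GRing.linear_for ?R ?U ?V ?s ?f =>
     lazymatch f with (fun _ => _) => fail | _ =>
       change (@GRing.linear_for R U V s (fun x => f x)); lin end
 | |- @GRing.linear_for _ _ _ _ (fun x => x) => exact: lin_id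
 | |- @GRing.linear_for _ _ _ _ (fun x => tlift ?G (@?h x)) => refine (@lin_lift_arg _ _ _ _ _ _ _ _ _); [bil | lin]
 | |- @GRing.linear_for _ _ _ _ (fun x => tlift (@?G x) ?t) => refine (@lin_lift_fun _ _ _ _ _ _ _ _) => ? ?; lin
 | |- @GRing.linear_for _ _ _ _ (fun x => tmul (@?h x) ?b) => refine (@lin_tmul_l _ _ _ _ _ _ _); lin
 | |- @GRing.linear_for _ _ _ _ (fun x => tmul ?a (@?h x)) => refine (@lin_tmul_r _ _ _ _ _ _ _); lin
 | |- @GRing.linear_for _ _ _ _ (fun x => (@?h1 x) + (@?h2 x)) => refine (@lin_add _ _ _ _ _ _ _); lin
 | |- @GRing.linear_for _ _ _ _ (fun x => ?c *: (@?h x)) => refine (@lin_scal_l _ _ _ _ _ _); lin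
 | |- @GRing.linear_for _ _ _ _ (fun x => (@?e x) *: ?v) => refine (@lin_scal_r _ _ _ _ _ _); slin
 | |- @GRing.linear_for _ _ _ _ (fun x => ?F (@?h x) ?c ?d) => refine (@lin_app3a _ _ _ _ _ _ F _ _ _ _ _); [lhyp | lin]
 | |- @GRing.linear_for _ _ _ _ (fun x => ?F ?c (@?h x) ?d) => refine (@lin_app3b _ _ _ _ _ _ F _ _ _ _ _); [lhyp | lin]
 | |- @GRing.linear_for _ _ _ _ (fun x => ?F (@?h x) ?c) => refine (@lin_app2l _ _ _ _ _ F _ _ _ _); [lhyp | lin]
 | |- @GRing.linear_for _ _ _ _ (fun x => ?F ?c (@?h x)) => refine (@lin_app2r _ _ _ _ _ F _ _ _ _); [lhyp | lin]
 | |- @GRing.linear_for _ _ _ _ (fun x => ?f (@?h x)) => refine (@lin_comp _ _ _ _ f _ _ _); [lhyp | lin]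
 | |- _ => lhyp
 | |- ?g => fail "lin: cannot handle" g
 end.


Section Tri.
Context {K : fieldType} (X Y Z : lmodType K).

Definition trilin (V : lmodType K) (T : X -> Y -> Z -> V) :=
  [/\ (forall y z, linear (fun x => T x y z)),
      (forall x z, linear (fun y => T x y z)) &
      (forall x y, linear (fun z => T x y z))].

Definition L3 (V : lmodType K) (T : X -> Y -> Z -> V) (t : tensor (tensor X Y) Z) : V :=
  tlift (fun u z => tlift (fun x y => T x y z) u) t.
Definition R3 (V : lmodType K) (T : X -> Y -> Z -> V) (t : tensor X (tensor Y Z)) : V :=
  tlift (fun x w => tlift (fun y z => T x y z) w) t.

Lemma tassocE (t : tensor X (tensor Y Z)) :
  tassoc t = R3 (fun x y z => (x \ot y) \ot z) t.
Proof. by []. Qed.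


Lemma L3_tmul (V : lmodType K) (T : X -> Y -> Z -> V) x y z :
  trilin T -> L3 T ((x \ot y) \ot z) = T x y z.
Proof.
move=> [T1 T2 T3]; rewrite /L3 lift_tmul; last by bil.
by rewrite lift_tmul //; bil.
Qed.

Lemma R3_tmul (V : lmodType K) (T : X -> Y -> Z -> V) x y z :
  trilin T -> R3 T (x \ot (y \ot z)) = T x y z.
Proof.
move=> [T1 T2 T3]; rewrite /R3 lift_tmul; last by bil.
by rewrite lift_tmul //; bil.
Qed.

Lemma L3_lin (V : lmodType K) (T : X -> Y -> Z -> V) : trilin T -> linear (L3 T).
Proof. move=> [T1 T2 T3]; rewrite /L3; apply: lift_lin; bil. Qed.

Lemma R3_lin (V : lmodType K) (T : X -> Y -> Z -> V) : trilin T -> linear (R3 T).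
Proof. move=> [T1 T2 T3]; rewrite /R3; apply: lift_lin; bil. Qed.

Lemma L3_tassoc (V : lmodType K) (T : X -> Y -> Z -> V) t :
  trilin T -> L3 T (tassoc t) = R3 T t.
Proof.
move=> tT; rewrite tassocE /R3 (lift_comp _ _ (L3_lin tT)); apply: lift_ext => x w.
rewrite (lift_comp _ _ (L3_lin tT)); apply: lift_ext => y z.
exact: L3_tmul.
Qed.

End Tri.

Section Main.
Variables (K : fieldType) (H A : lmodType K)
  (mulH : H -> H -> H) (oneH : H) (alpha alphai : H -> H)
  (delH : H -> tensor H H) (epsH : H -> K)
  (beta betai : A -> A) (delA : A -> tensor A A) (epsA : A -> K)
  (rho : A -> tensor H A) (m : int).

Hypotheses (HmL : forall b, linear (mulH^~ b)) (HmR : forall a, linear (mulH a))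
  (Hal : linear alpha) (HalK : cancel alpha alphai) (HaliK : cancel alphai alpha)
  (Hass : forall a b c, mulH (alpha a) (mulH b c) = mulH (mulH a b) (alpha c))
  (HalM : forall a b, alpha (mulH a b) = mulH (alpha a) (alpha b))
  (Hu_l : forall a, mulH oneH a = alpha a) (Hu_r : forall a, mulH a oneH = alpha a)
  (Hal1 : alpha oneH = oneH).
Hypotheses (HdH : linear delH) (HeH : scalar epsH)
  (HcoH : forall c, tassoc (\sum_(p <- rep (delH c)) alphai p.1 \ot delH p.2)
    = \sum_(p <- rep (delH c)) delH p.1 \ot alphai p.2)
  (HdHal : forall c, delH (alpha c) = \sum_(p <- rep (delH c)) alpha p.1 \ot alpha p.2)
  (HcuHl : forall c, \sum_(p <- rep (delH c)) epsH p.2 *: p.1 = alphai c)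
  (HcuHr : forall c, \sum_(p <- rep (delH c)) epsH p.1 *: p.2 = alphai c)
  (HeHal : forall c, epsH (alpha c) = epsH c)
  (HdelM : forall h g, delH (mulH h g) = \sum_(p <- rep (delH h)) \sum_(q <- rep (delH g))
                      mulH p.1 q.1 \ot mulH p.2 q.2)
  (Hdel1 : delH oneH = oneH \ot oneH)
  (HeM : forall h g, epsH (mulH h g) = epsH h * epsH g)
  (He1 : epsH oneH = 1).
Hypotheses (Hb : linear beta) (HbK : cancel beta betai) (HbiK : cancel betai beta)
  (HdA : linear delA) (HeA : scalar epsA)
  (HcoA : forall c, tassoc (\sum_(p <- rep (delA c)) betai p.1 \ot delA p.2)
    = \sum_(p <- rep (delA c)) delA p.1 \ot betai p.2)
  (HdAb : forall c, delA (beta c) = \sum_(p <- rep (delA c)) beta p.1 \ot beta p.2)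
  (HcuAl : forall c, \sum_(p <- rep (delA c)) epsA p.2 *: p.1 = betai c)
  (HcuAr : forall c, \sum_(p <- rep (delA c)) epsA p.1 *: p.2 = betai c)
  (HeAb : forall c, epsA (beta c) = epsA c).
Hypotheses (Hrho : linear rho)
  (HcoM : forall x, \sum_(p <- rep (rho x)) delH p.1 \ot betai p.2
    = tassoc (\sum_(p <- rep (rho x)) alphai p.1 \ot rho p.2))
  (Hrhob : forall x, rho (beta x) = \sum_(p <- rep (rho x)) alpha p.1 \ot beta p.2)
  (HcuM : forall x, \sum_(p <- rep (rho x)) epsH p.1 *: p.2 = betai x)
  (Hrd : forall b, \sum_(p <- rep (rho b)) p.1 \ot delA p.2
    = \sum_(p <- rep (delA b)) \sum_(q <- rep (rho p.1)) \sum_(r <- rep (rho p.2))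
        mulH q.1 r.1 \ot (q.2 \ot r.2))
  (Hre : forall b, \sum_(p <- rep (rho b)) epsA p.2 *: p.1 = epsA b *: oneH).

Hypotheses (Hali : linear alphai) (Hbi : linear betai)
  (Hz : forall n, linear (zpow alpha alphai n)).

Definition Dk (a : A) (h : H) : tensor (tensor A H) (tensor A H) :=
  tlift (fun q1 q2 => tlift (fun r1 r2 => tlift (fun s1 s2 =>
    (q1 \ot mulH (zpow alpha alphai m r1) (alphai s1)) \ot (beta r2 \ot s2)) (delH h)) (rho q2)) (delA a).

Lemma Dk_bilin : bilin Dk.
Proof.
rewrite /Dk; bil.
Qed.


Section Ids.
Variable V : lmodType K.

Lemma dAb (G : A -> A -> V) c : bilin G ->
  tlift G (delA (beta c)) = tlift (fun u v => G (beta u) (beta v)) (delA c).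
Proof.
move=> bG; have -> : delA (beta c) = tlift (fun u v => beta u \ot beta v) (delA c) by exact: HdAb.
exact: lift_lift_tmul.
Qed.

Lemma rb (G : H -> A -> V) c : bilin G ->
  tlift G (rho (beta c)) = tlift (fun u v => G (alpha u) (beta v)) (rho c).
Proof.
move=> bG; have -> : rho (beta c) = tlift (fun u v => alpha u \ot beta v) (rho c) by exact: Hrhob.
exact: lift_lift_tmul.
Qed.

Lemma rbi (G : H -> A -> V) c : bilin G ->
  tlift G (rho (betai c)) = tlift (fun u v => G (alphai u) (betai v)) (rho c).
Proof.
move=> bG; have [G1 G2] := bG.
have e : rho c = tlift (fun u v => alpha u \ot beta v) (rho (betai c)).
  by have := Hrhob (betai c); rewrite HbiK.
rewrite [in RHS]e lift_lift_tmul; last by bil.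
by apply: lift_ext => x y; rewrite HalK HbK.
Qed.

Lemma dHa (G : H -> H -> V) c : bilin G ->
  tlift G (delH (alpha c)) = tlift (fun u v => G (alpha u) (alpha v)) (delH c).
Proof.
move=> bG; have -> : delH (alpha c) = tlift (fun u v => alpha u \ot alpha v) (delH c) by exact: HdHal.
exact: lift_lift_tmul.
Qed.

Lemma dHai (G : H -> H -> V) c : bilin G ->
  tlift G (delH (alphai c)) = tlift (fun u v => G (alphai u) (alphai v)) (delH c).
Proof.
move=> bG; have [G1 G2] := bG.
have e : delH c = tlift (fun u v => alpha u \ot alpha v) (delH (alphai c)).
  by have := HdHal (alphai c); rewrite HaliK.
rewrite [in RHS]e lift_lift_tmul; last by bil.
by apply: lift_ext => x y; rewrite !HalK.
Qed.

Lemma dHz n (G : H -> H -> V) c : bilin G ->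
  tlift G (delH (zpow alpha alphai n c)) =
  tlift (fun u v => G (zpow alpha alphai n u) (zpow alpha alphai n v)) (delH c).
Proof.
have it : forall f : H -> H, (forall (G : H -> H -> V) c, bilin G ->
    tlift G (delH (f c)) = tlift (fun u v => G (f u) (f v)) (delH c)) ->
  linear f ->
  forall k (G : H -> H -> V) c, bilin G ->
    tlift G (delH (iter k f c)) = tlift (fun u v => G (iter k f u) (iter k f v)) (delH c).
  move=> f ef lf; elim=> [|k IH] G' c' bG' /=.
    by apply: lift_ext.
  rewrite ef // IH //; have [G1 G2] := bG'; bil.
case: n => n /= bG.
  exact: (it alpha (fun G c bG => dHa c bG) Hal n G c bG).
exact: (it alphai (fun G c bG => dHai c bG) Hali n.+1 G c bG).
Qed.

Lemma dHm (G : H -> H -> V) g k : bilin G ->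
  tlift G (delH (mulH g k)) =
  tlift (fun p1 p2 => tlift (fun q1 q2 => G (mulH p1 q1) (mulH p2 q2)) (delH k)) (delH g).
Proof.
move=> bG; have [G1 G2] := bG.
have -> : delH (mulH g k) = tlift (fun p1 p2 => tlift (fun q1 q2 => mulH p1 q1 \ot mulH p2 q2) (delH k)) (delH g) by exact: HdelM.
rewrite (lift_comp _ _ (lift_lin bG)); apply: lift_ext => x y.
rewrite (lift_comp _ _ (lift_lin bG)); apply: lift_ext => u v.
exact: lift_tmul.
Qed.

Lemma coA (T : A -> A -> A -> V) a : trilin T ->
  tlift (fun x y => tlift (fun y1 y2 => T x y1 y2) (delA y)) (delA a) =
  tlift (fun x y => tlift (fun x1 x2 => T (beta x1) x2 (betai y)) (delA x)) (delA a).
Proof.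
move=> tT; have [T1 T2 T3] := tT.
pose T' := fun x y z => T (beta x) y z.
have tT' : trilin T' by rewrite /T'; tril.
have [T1' T2' T3'] := tT'.
have e : L3 T' (tassoc (tlift (fun x y => betai x \ot delA y) (delA a)))
       = L3 T' (tlift (fun x y => delA x \ot betai y) (delA a)) := congr1 (L3 T') (HcoA a).
rewrite L3_tassoc // /R3 lift_lift_tmul in e; last by bil.
rewrite /L3 lift_lift_tmul in e; last by bil.
rewrite /T' in e; rewrite -[RHS]e; apply: lift_ext => x y.
by rewrite HbiK.
Qed.

Lemma coH (T : H -> H -> H -> V) h : trilin T ->
  tlift (fun x y => tlift (fun x1 x2 => T x1 x2 y) (delH x)) (delH h) =
  tlift (fun x y => tlift (fun y1 y2 => T (alphai x) y1 (alpha y2)) (delH y)) (delH h).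
Proof.
move=> tT; have [T1 T2 T3] := tT.
pose T' := fun x y z => T x y (alpha z).
have tT' : trilin T' by rewrite /T'; tril.
have [T1' T2' T3'] := tT'.
have e : L3 T' (tassoc (tlift (fun x y => alphai x \ot delH y) (delH h)))
       = L3 T' (tlift (fun x y => delH x \ot alphai y) (delH h)) := congr1 (L3 T') (HcoH h).
rewrite L3_tassoc // /R3 lift_lift_tmul in e; last by bil.
rewrite /L3 lift_lift_tmul in e; last by bil.
rewrite /T' in e; rewrite [RHS]e; apply: lift_ext => x y.
by rewrite HaliK.
Qed.

Lemma coM (T : H -> H -> A -> V) b : trilin T ->
  tlift (fun x z => tlift (fun x1 x2 => T x1 x2 z) (delH x)) (rho b) =
  tlift (fun p1 p2 => tlift (fun y z => T (alphai p1) y (beta z)) (rho p2)) (rho b).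
Proof.
move=> tT; have [T1 T2 T3] := tT.
pose T' := fun x y z => T x y (beta z).
have tT' : trilin T' by rewrite /T'; tril.
have [T1' T2' T3'] := tT'.
have e : L3 T' (tlift (fun x y => delH x \ot betai y) (rho b))
       = L3 T' (tassoc (tlift (fun x y => alphai x \ot rho y) (rho b))) := congr1 (L3 T') (HcoM b).
rewrite L3_tassoc // /R3 lift_lift_tmul in e; last by bil.
rewrite /L3 lift_lift_tmul in e; last by bil.
rewrite /T' in e; rewrite -[RHS]e; apply: lift_ext => x y.
by rewrite HbiK.
Qed.

Lemma rd (T : H -> A -> A -> V) b : trilin T ->
  tlift (fun x w => tlift (fun y z => T x y z) (delA w)) (rho b) =
  tlift (fun p1 p2 => tlift (fun u1 u2 => tlift (fun w1 w2 => T (mulH u1 w1) u2 w2) (rho p2)) (rho p1)) (delA b).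
Proof.
move=> tT; have [T1 T2 T3] := tT.
have e : R3 T (tlift (fun x y => x \ot delA y) (rho b))
  = R3 T (tlift (fun p1 p2 => tlift (fun u1 u2 => tlift (fun w1 w2 =>
        mulH u1 w1 \ot (u2 \ot w2)) (rho p2)) (rho p1)) (delA b)) := congr1 (R3 T) (Hrd b).
have e1 : tlift (fun x w => tlift (fun y z => T x y z) (delA w)) (rho b)
    = R3 T (tlift (fun x y => x \ot delA y) (rho b)).
  by rewrite /R3 lift_lift_tmul //; bil.
rewrite e1 e (lift_comp _ _ (R3_lin tT)); apply: lift_ext => x y.
rewrite (lift_comp _ _ (R3_lin tT)); apply: lift_ext => u1 u2.
rewrite (lift_comp _ _ (R3_lin tT)); apply: lift_ext => w1 w2.
exact: R3_tmul.
Qed.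

End Ids.


Lemma Haim a b : alphai (mulH a b) = mulH (alphai a) (alphai b).
Proof. by apply: (can_inj HalK); rewrite HaliK HalM !HaliK. Qed.
Lemma Hai1 : alphai oneH = oneH.
Proof. by rewrite -{1}Hal1 HalK. Qed.
Lemma eHai x : epsH (alphai x) = epsH x.
Proof. by rewrite -{2}(HaliK x) HeHal. Qed.

Lemma zpow_iter (P : H -> H -> Prop) n :
  (forall x y, P x y -> P (alpha x) (alpha y)) ->
  (forall x y, P x y -> P (alphai x) (alphai y)) ->
  forall x y, P x y -> P (zpow alpha alphai n x) (zpow alpha alphai n y).
Proof.
move=> Pa Pai x y Pxy; case: n => n /=.
  by elim: n => //= n IH; apply: Pa.
by elim: n => [|n IH] /=; apply: Pai => //.
Qed.

Lemma zal n x : zpow alpha alphai n (alpha x) = alpha (zpow alpha alphai n x).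
Proof.
case: n => n /=; first by elim: n => //= n ->.
elim: n => [|n IH] /=; first by rewrite HalK HaliK.
by rewrite IH HalK HaliK.
Qed.

Lemma zali n x : zpow alpha alphai n (alphai x) = alphai (zpow alpha alphai n x).
Proof. by rewrite -{2}(HaliK x) zal HalK. Qed.

Lemma zmul n x y : zpow alpha alphai n (mulH x y) = mulH (zpow alpha alphai n x) (zpow alpha alphai n y).
Proof.
case: n => n /=; elim: n => [|n IH] //=; rewrite ?IH ?HalM ?Haim //.
Qed.

Lemma z1 n : zpow alpha alphai n oneH = oneH.
Proof.
case: n => n /=; elim: n => [|n IH] //=; rewrite ?IH ?Hal1 ?Hai1 //.
Qed.

Lemma ez n x : epsH (zpow alpha alphai n x) = epsH x.
Proof.
case: n => n /=.
  by elim: n => [|n IH] //=; rewrite HeHal.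
by elim: n => [|n IH] /=; rewrite eHai.
Qed.

Definition gam (t : tensor A H) := tlift (fun a h => beta a \ot alpha h) t.
Definition gi (t : tensor A H) := tlift (fun a h => betai a \ot alphai h) t.
Definition Del (t : tensor A H) := tlift Dk t.
Definition Eps (t : tensor A H) : K := tlift (V := K^o) (fun a h => epsA a * epsH h) t.

Lemma gam_lin : linear gam. Proof. rewrite /gam; apply: lift_lin; bil. Qed.
Lemma gi_lin : linear gi. Proof. rewrite /gi; apply: lift_lin; bil. Qed.
Lemma Del_lin : linear Del. Proof. exact: (lift_lin Dk_bilin). Qed.
Lemma Eps_lin : scalar Eps.
Proof.
apply: (lift_lin (V := K^o)); split => [b c x y|a c x y] /=.
- by rewrite HeA mulrDl; congr (_ + _); rewrite -mulrA.
- by rewrite HeH mulrDr; congr (_ + _); rewrite mulrCA.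
Qed.

Lemma gam_tmul a h : gam (a \ot h) = beta a \ot alpha h.
Proof. by rewrite /gam lift_tmul //; bil. Qed.
Lemma gi_tmul a h : gi (a \ot h) = betai a \ot alphai h.
Proof. by rewrite /gi lift_tmul //; bil. Qed.
Lemma Del_tmul a h : Del (a \ot h) = Dk a h.
Proof. by rewrite /Del lift_tmul //; exact: Dk_bilin. Qed.
Lemma Eps_tmul a h : Eps (a \ot h) = epsA a * epsH h.
Proof.
rewrite /Eps (lift_tmul (V := K^o)) //; split => [b c x y|a' c x y] /=.
- by rewrite HeA mulrDl; congr (_ + _); rewrite -mulrA.
- by rewrite HeH mulrDr; congr (_ + _); rewrite mulrCA.
Qed.

Lemma Dk_push (W : lmodType K) (phi : tensor (tensor A H) (tensor A H) -> W) a h :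
  linear phi -> phi (Dk a h) =
  tlift (fun q1 q2 => tlift (fun r1 r2 => tlift (fun s1 s2 =>
    phi ((q1 \ot mulH (zpow alpha alphai m r1) (alphai s1)) \ot (beta r2 \ot s2))) (delH h)) (rho q2)) (delA a).
Proof.
move=> lp; rewrite /Dk (lift_comp _ _ lp); apply: lift_ext => q1 q2.
rewrite (lift_comp _ _ lp); apply: lift_ext => r1 r2.
by rewrite (lift_comp _ _ lp).
Qed.

Lemma gamK : cancel gam gi.
Proof.
move=> t; rewrite /gam (lift_comp _ _ gi_lin) -[RHS]tensor_eq; apply: lift_ext => a h.
by rewrite gi_tmul HbK HalK.
Qed.

Lemma giK : cancel gi gam.
Proof.
move=> t; rewrite /gi (lift_comp _ _ gam_lin) -[RHS]tensor_eq; apply: lift_ext => a h.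
by rewrite gam_tmul HbiK HaliK.
Qed.

Lemma Eps_gam t : Eps (gam t) = Eps t.
Proof.
have := Eps_lin; have := gam_lin => gl el.
move: t; apply: (tensor_ext (V := K^o)).
- exact: (lin_comp (V := tensor A H) (W := K^o) el gl).
- exact: el.
by move=> a h; rewrite gam_tmul !Eps_tmul HeAb HeHal.
Qed.

Lemma Del_gam t : Del (gam t) = tlift (fun u w => gam u \ot gam w) (Del t).
Proof.
have [Dk1 Dk2] := Dk_bilin; have := gam_lin; have := Del_lin => dl gl.
move: t; apply: (tensor_ext (phi := fun t => Del (gam t)) (psi := fun t => tlift (fun u w => gam u \ot gam w) (Del t))).
lin. lin. move=> a h.
rewrite gam_tmul !Del_tmul Dk_push; last by lin.
rewrite /Dk dAb; last by bil.
under lift_ext => q1 q2 do (rewrite rb; last by bil).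
under lift_ext => q1 q2 do under lift_ext => r1 r2 do (rewrite dHa; last by bil).
apply: lift_ext => q1 q2; apply: lift_ext => r1 r2; apply: lift_ext => s1 s2.
rewrite lift_tmul; last by bil.
by rewrite !gam_tmul HalK HalM HaliK zal.
Qed.

Section Cu.
Variable W : lmodType K.
Lemma cuHl (psi : H -> W) c : linear psi ->
  tlift (fun x y => epsH y *: psi x) (delH c) = psi (alphai c).
Proof.
move=> lp; rewrite -(HcuHl c) (lin_sum lp); apply: eq_bigr => p _.
by rewrite (linZ lp).
Qed.
Lemma cuHr (psi : H -> W) c : linear psi ->
  tlift (fun x y => epsH x *: psi y) (delH c) = psi (alphai c).
Proof.
move=> lp; rewrite -(HcuHr c) (lin_sum lp); apply: eq_bigr => p _.
by rewrite (linZ lp).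
Qed.
Lemma cuAl (psi : A -> W) c : linear psi ->
  tlift (fun x y => epsA y *: psi x) (delA c) = psi (betai c).
Proof.
move=> lp; rewrite -(HcuAl c) (lin_sum lp); apply: eq_bigr => p _.
by rewrite (linZ lp).
Qed.
Lemma cuAr (psi : A -> W) c : linear psi ->
  tlift (fun x y => epsA x *: psi y) (delA c) = psi (betai c).
Proof.
move=> lp; rewrite -(HcuAr c) (lin_sum lp); apply: eq_bigr => p _.
by rewrite (linZ lp).
Qed.
Lemma cuM (psi : A -> W) c : linear psi ->
  tlift (fun x y => epsH x *: psi y) (rho c) = psi (betai c).
Proof.
move=> lp; rewrite -(HcuM c) (lin_sum lp); apply: eq_bigr => p _.
by rewrite (linZ lp).
Qed.
Lemma reps (psi : H -> W) c : linear psi ->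
  tlift (fun x y => epsA y *: psi x) (rho c) = epsA c *: psi oneH.
Proof.
move=> lp; rewrite -(linZ lp) -(Hre c) (lin_sum lp); apply: eq_bigr => p _.
by rewrite (linZ lp).
Qed.
End Cu.

Lemma counit_l t : tlift (fun u w => Eps w *: u) (Del t) = gi t.
Proof.
have [Dk1 Dk2] := Dk_bilin; have := gi_lin; have := Del_lin; have := Eps_lin => el dl gl.
move: t; apply: (tensor_ext (phi := fun t => tlift (fun u w => Eps w *: u) (Del t)) (psi := gi)).
lin. lin. move=> a h.
rewrite Del_tmul Dk_push; last by lin.
under lift_ext => q1 q2 do under lift_ext => r1 r2 do under lift_ext => s1 s2 do
  (rewrite lift_tmul; last by bil).
under lift_ext => q1 q2 do under lift_ext => r1 r2 do under lift_ext => s1 s2 do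
  rewrite Eps_tmul HeAb mulrC -scalerA.
under lift_ext => q1 q2 do under lift_ext => r1 r2 do (rewrite cuHl; last by lin).
under lift_ext => q1 q2 do (rewrite reps; last by lin).
rewrite cuAl; last by lin.
by rewrite z1 Hu_l HaliK gi_tmul.
Qed.

Lemma counit_r t : tlift (fun u w => Eps u *: w) (Del t) = gi t.
Proof.
have [Dk1 Dk2] := Dk_bilin; have := gi_lin; have := Del_lin; have := Eps_lin => el dl gl.
move: t; apply: (tensor_ext (phi := fun t => tlift (fun u w => Eps u *: w) (Del t)) (psi := gi)).
lin. lin. move=> a h.
rewrite Del_tmul Dk_push; last by lin.
under lift_ext => q1 q2 do under lift_ext => r1 r2 do under lift_ext => s1 s2 do
  (rewrite lift_tmul; last by bil).
under lift_ext => q1 q2 do under lift_ext => r1 r2 do under lift_ext => s1 s2 do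
  rewrite Eps_tmul HeM ez eHai mulrA [_ * epsH s1]mulrC -scalerA.
under lift_ext => q1 q2 do under lift_ext => r1 r2 do (rewrite cuHr; last by lin).
under lift_ext => q1 q2 do under lift_ext => r1 r2 do rewrite -scalerA.
under lift_ext => q1 q2 do (rewrite lift_scale cuM; last by lin).
rewrite cuAr; last by lin.
by rewrite HbiK gi_tmul.
Qed.


Lemma tassoc_tmul (X Y Z : lmodType K) (x : X) (w : tensor Y Z) :
  tassoc (x \ot w) = tlift (fun b c => (x \ot b) \ot c) w.
Proof. by rewrite tassocE /R3 lift_tmul //; bil. Qed.

Lemma tassoc_lin (X Y Z : lmodType K) : linear (@tassoc K X Y Z).
Proof.
have tT : trilin (fun (x : X) (y : Y) (z : Z) => (x \ot y) \ot z) by tril.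
by move=> c u v; rewrite !tassocE (R3_lin tT).
Qed.

Lemma Dk_push_l a h (y : tensor A H) :
  Dk a h \ot y =
  tlift (fun q1 q2 => tlift (fun r1 r2 => tlift (fun s1 s2 =>
    ((q1 \ot mulH (zpow alpha alphai m r1) (alphai s1)) \ot (beta r2 \ot s2)) \ot y) (delH h)) (rho q2)) (delA a).
Proof. by rewrite (Dk_push (phi := fun T => T \ot y)) //; lin. Qed.

Lemma kern x2 x3 x :
  mulH (zpow alpha alphai m x2) (alphai (mulH (zpow alpha alphai m (alphai x3)) (alphai (alphai x))))
  = alphai (mulH (zpow alpha alphai m (mulH x2 (alphai x3))) (alphai x)).
Proof.
rewrite Haim Haim zmul zali Haim.
by rewrite -{1}[zpow alpha alphai m x2]HaliK Hass HaliK.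
Qed.

Ltac d1 t := under lift_ext => ? ? do t.
Ltac d2 t := d1 ltac:(d1 t).
Ltac d3 t := d1 ltac:(d2 t).
Ltac d4 t := d1 ltac:(d3 t).
Ltac d5 t := d1 ltac:(d4 t).
Ltac d6 t := d1 ltac:(d5 t).
Ltac d7 t := d1 ltac:(d6 t).

Lemma coassoc t :
  tassoc (tlift (fun u w => gi u \ot Del w) (Del t)) = tlift (fun u w => Del u \ot gi w) (Del t).
Proof.
have [Dk1 Dk2] := Dk_bilin; have := gi_lin; have := Del_lin => dl gl.
have tl := @tassoc_lin (tensor A H) (tensor A H) (tensor A H).
move: t; apply: (tensor_ext (phi := fun t => tassoc (tlift (fun u w => gi u \ot Del w) (Del t)))
   (psi := fun t => tlift (fun u w => Del u \ot gi w) (Del t))).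
lin. lin. move=> a h.
rewrite Del_tmul (Dk_push (phi := fun T => tassoc (tlift (fun u w => gi u \ot Del w) T))); last by lin.
rewrite [RHS]Dk_push; last by lin.
d2 ltac:(d1 ltac:(rewrite lift_tmul; last by bil)).
d2 ltac:(d1 ltac:(rewrite gi_tmul Del_tmul tassoc_tmul)).
d3 ltac:(rewrite (Dk_push (phi := tlift _)); last by lin).
d6 ltac:(rewrite lift_tmul; last by bil).
d3 ltac:(rewrite dAb; last by bil).
d4 ltac:(rewrite rb; last by bil).
d2 ltac:(rewrite lift_exchange).
d3 ltac:(rewrite lift_exchange).
d1 ltac:(rewrite rd; last by tril).
rewrite coA; last by tril.
d3 ltac:(rewrite rbi; last by bil).
d4 ltac:(rewrite rbi; last by bil).
d7 ltac:(rewrite HbK HaliK HbiK).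
symmetry.
d3 ltac:(rewrite lift_tmul; last by bil).
d3 ltac:(rewrite Del_tmul gi_tmul HbK Dk_push_l).
d5 ltac:(rewrite dHm; last by bil).
d5 ltac:(rewrite dHz; last by bil).
d6 ltac:(rewrite dHai; last by bil).
d2 ltac:(rewrite lift_exchange).
d3 ltac:(rewrite lift_exchange).
d4 ltac:(rewrite lift_exchange).
d1 ltac:(rewrite lift_exchange).
d2 ltac:(rewrite lift_exchange).
d3 ltac:(rewrite coM; last by tril).
d5 ltac:(rewrite coH; last by tril).
apply: lift_ext => ? ?; apply: lift_ext => ? ?; apply: lift_ext => ? ?; apply: lift_ext => ? ?.
apply: lift_ext => ? ?; apply: lift_ext => ? ?; apply: lift_ext => ? ?.
by rewrite HalK kern.
Qed.

Lemma main_ax : HomCoalgebraAx (smash_gam alpha beta) gi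
  (smash_del mulH alpha alphai delH beta delA rho m) (smash_eps epsH epsA).
Proof.
split.
- exact: gam_lin.
- exact: gamK.
- exact: giK.
- exact: Del_lin.
- exact: Eps_lin.
- exact: coassoc.
- exact: Del_gam.
- exact: counit_l.
- exact: counit_r.
- exact: Eps_gam.
Qed.
End Main.

Unset Implicit Arguments.
Theorem proposition3p1 (K : fieldType) (H A : lmodType K)
  (mulH : H -> H -> H) (oneH : H) (alpha alphai : H -> H)
  (delH : H -> tensor H H) (epsH : H -> K)
  (beta betai : A -> A) (delA : A -> tensor A A) (epsA : A -> K)
  (rho : A -> tensor H A) (m : int) :
  HomBialgebraAx mulH oneH alpha alphai delH epsH ->
  HomComoduleCoalgebraAx mulH oneH alpha alphai delH epsH
    beta betai delA epsA rho ->
  is_hom_coalgebra (smash_gam alpha beta)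
    (smash_del mulH alpha alphai delH beta delA rho m)
    (smash_eps epsH epsA).
Proof.
move=> [[HmL HmR Hal HalK HaliK Hass HalM Hu_l Hu_r Hal1]
        [_ _ _ HdH HeH HcoH HdHal HcuHl HcuHr HeHal] HdelM Hdel1 HeM He1].
move=> [[Hb HbK HbiK HdA HeA HcoA HdAb HcuAl HcuAr HeAb]
        [_ _ _ Hrho HcoM Hrhob HcuM] Hrd Hre].
have Hali : linear alphai by exact: (lin_inv Hal HalK HaliK).
have Hbi : linear betai by exact: (lin_inv Hb HbK HbiK).
have it : forall f : H -> H, linear f -> forall k, linear (iter k f).
  by move=> f lf; elim=> [|k IH] //=; exact: (lin_comp lf IH).
have Hz : forall n, linear (zpow alpha alphai n).
  by case=> n /=; apply: it.
exists (gi alphai betai).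
apply: main_ax; eassumption.
Qed.
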